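(* For any distribution $P_{\bar Z\bar Y}$ on $\widehat{\mathcal S}\times\widehat{\mathcal X}$ and any positive integer $M$, there exists a deterministic $(M,d_s,d_x,\epsilon)$ code with \[\epsilon\le\int_0^1\mathbb E\Big[\big(\mathbb P[\pi(X,\bar Z,\bar Y)>t\mid X]\big)^M\Big]\,\mathrm dt,\] where $(X,\bar Z,\bar Y)\sim P_X\times P_{\bar Z\bar Y}$ and $\pi(x,z,y)=\mathbb P[\mathsf d_s(S,z)>d_s\text{ or }\mathsf d_x(x,y)>d_x\mid X=x]$ with $S\sim P_{S|X=x}$.
   Context: Let $\mathcal S,\mathcal X,\widehat{\mathcal S},\widehat{\mathcal X}$ be finite sets, $P_{SX}$ a distribution on $\mathcal S\times\mathcal X$, and $\mathsf d_s:\mathcal S\times\widehat{\mathcal S}\to[0,\infty)$, $\mathsf d_x:\mathcal X\times\widehat{\mathcal X}\to[0,\infty)$ distortion measures; fix $d_s,d_x\ge0$. An $(M,d_s,d_x,\epsilon)$ code is a random encoder $P_{U|X}:\mathcal X\to\{1,\dots,M\}$ and a random decoder $P_{ZY|U}:\{1,\dots,M\}\to\widehat{\mathcal S}\times\widehat{\mathcal X}$ (so $S-X-U-(Z,Y)$) such that $\mathbb P[\mathsf d_s(S,Z)>d_s\text{ or }\mathsf d_x(X,Y)>d_x]\le\epsilon$; it is deterministic if both mappings are deterministic functions. *)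

(* Defs.v *)
From HB Require Import structures.
From mathcomp Require Import all_boot all_order all_algebra.
From mathcomp Require Import all_classical all_reals all_analysis.
Set Implicit Arguments. Unset Strict Implicit. Unset Printing Implicit Defensive.
Import Order.TTheory GRing.Theory Num.Theory.
Local Open Scope ring_scope.

Definition is_pmf (R : realType) (T : finType) (P : T -> R) : Prop :=
  (forall t, 0 <= P t) /\ \sum_(t : T) P t = 1.

Definition marg_X (R : realType) (S X : finType) (P : S * X -> R) (x : X) : R :=
  \sum_(s : S) P (s, x).

(* pi(x,z,y) = P[ d_s(S,z) > ds or d_x(x,y) > dx | X = x ], S ~ P_{S|X=x}.
   (When P_X(x) = 0 the conditional is undefined; we use the value 0, which
   never matters since such x carry zero weight.) *)
Definition pi_fun (R : realType) (S X Sh Xh : finType) (P : S * X -> R)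
  (dS : S -> Sh -> R) (dX : X -> Xh -> R) (ds dx : R)
  (x : X) (z : Sh) (y : Xh) : R :=
  (\sum_(s : S) P (s, x) * (((ds < dS s z) || (dx < dX x y))%R)%:R) / marg_X P x.

Definition det_code_error (R : realType) (S X Sh Xh : finType) (M : nat)
  (P : S * X -> R) (dS : S -> Sh -> R) (dX : X -> Xh -> R) (ds dx : R)
  (f : X -> 'I_M) (g : 'I_M -> Sh * Xh) : R :=
  \sum_(p : S * X)
     P p * (((ds < dS p.1 (g (f p.2)).1) || (dx < dX p.2 (g (f p.2)).2))%R)%:R.

Definition rcu_integrand (R : realType) (S X Sh Xh : finType) (M : nat)
  (P : S * X -> R) (Q : Sh * Xh -> R) (dS : S -> Sh -> R) (dX : X -> Xh -> R)
  (ds dx : R) (t : R) : R :=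
  \sum_(x : X) marg_X P x *
     (\sum_(q : Sh * Xh) Q q * ((t < pi_fun P dS dX ds dx x q.1 q.2)%R)%:R) ^+ M.

(* Main.v *)
Require Import Defs.
From HB Require Import structures.
From mathcomp Require Import all_boot all_order all_algebra.
From mathcomp Require Import all_classical all_reals all_analysis.
From mathcomp Require Import measurable_realfun.
Import Order.TTheory GRing.Theory Num.Theory.
Local Open Scope ring_scope.
Local Open Scope classical_set_scope.

Lemma step_int (R : realType) (a v : R) : 0 <= a -> 0 <= v <= 1 ->
 (\int[@lebesgue_measure R]_(t in `[0%R, 1%R]%classic) (a * ((t < v)%R)%:R)%:E = (a*v)%:E)%E.
Proof.
move=> a0 /andP[v0 v1].
transitivity (\int[@lebesgue_measure R]_(t in `[0%R, 1%R]%classic)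
   (a%:E * (\1_([set` `]-oo, v[%R]) t)%:E))%E.
  apply: eq_integral => t _; rewrite -EFinM; congr (_ * _)%:E.
  by rewrite indicE mem_setE in_itv /=.
rewrite ge0_integralZl_EFin //.
rewrite integral_indic //.
have -> : ([set` `]-oo, v[%R] `&` `[0%R, 1%R]%classic) = [set` `[0%R, v[%R] :> set R.
  apply/seteqP; split => t /=; rewrite !in_itv /=.
    by move=> [tv /andP[t0 t1]]; rewrite t0 tv.
  move=> /andP[t0 tv]; split => //; rewrite t0 /=.
  exact: (le_trans (ltW tv) v1).
have := @lebesgue_measure_itv R `[0%R, v[%R; rewrite /= => ->.
case: ltP => [_|vle]; first by rewrite sube0 -EFinM.
have -> : v = 0 by apply/eqP; rewrite eq_le -lee_fin vle v0.
by rewrite mulr0 mule0.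
apply/measurable_EFinP; exact: measurable_indic.
Qed.

Lemma sum_int (R : realType) (I : finType) (a v : I -> R) :
  (forall i, 0 <= a i) -> (forall i, 0 <= v i <= 1) ->
 (\int[@lebesgue_measure R]_(t in `[0%R, 1%R]%classic)
    (\sum_i a i * ((t < v i)%R)%:R)%:E = (\sum_i a i * v i)%:E)%E.
Proof.
move=> a0 v01.
under eq_integral do rewrite -sumEFin.
rewrite ge0_integral_sum //; last first.
- by move=> i t _; rewrite lee_fin mulr_ge0.
- move=> i; apply/measurable_EFinP; apply: measurable_funM => //.
  rewrite (_ : (fun t : R => ((t < v i)%R)%:R) = \1_([set` `]-oo, v i[%R])).
    exact: measurable_indic.
  by apply/funext => t; rewrite indicE mem_setE in_itv.
rewrite -sumEFin; apply: eq_bigr => i _; exact: step_int.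
Qed.

Definition amin (I : finType) (R : realType) (i0 : I) (F : I -> R) :=
  @Order.arg_min _ R I i0 xpredT F.
Arguments amin {I R}.
Lemma aminP (I : finType) (R : realType) (i0 : I) (F : I -> R) j :
  F (amin i0 F) <= F j.
Proof. by rewrite /amin; case: arg_minP => // i _ H; apply: H. Qed.

Theorem theorem1 (R : realType) (S X Sh Xh : finType)
  (P : S * X -> R) (dS : S -> Sh -> R) (dX : X -> Xh -> R) (ds dx : R)
  (Q : Sh * Xh -> R) (M : nat) :
  is_pmf P -> (forall s z, 0 <= dS s z) -> (forall x y, 0 <= dX x y) ->
  0 <= ds -> 0 <= dx -> is_pmf Q -> (0 < M)%N ->
  exists (f : X -> 'I_M) (g : 'I_M -> Sh * Xh),
    ((det_code_error P dS dX ds dx f g)%:E <=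
     \int[@lebesgue_measure R]_(t in `[0%R, 1%R]%classic)
        (rcu_integrand M P Q dS dX ds dx t)%:E)%E.
Proof.
move=> [P0 P1] _ _ _ _ [Q0 Q1] HM.
pose PX := marg_X P.
pose pi := pi_fun P dS dX ds dx.
have PX0 x : 0 <= PX x by apply: sumr_ge0 => s _.
have num_le x z y : \sum_s P (s, x) * (((ds < dS s z) || (dx < dX x y))%R)%:R <= PX x.
  apply: ler_sum => s _; case: (_ || _); rewrite ?mulr1 ?mulr0 //.
have num_ge0 x z y : 0 <= \sum_s P (s, x) * (((ds < dS s z) || (dx < dX x y))%R)%:R.
  by apply: sumr_ge0 => s _; apply: mulr_ge0.
have pi01 x z y : 0 <= pi x z y <= 1.
  rewrite /pi /pi_fun -/(marg_X P x) -/(PX x).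
  have [->|nz] := eqVneq (PX x) 0; first by rewrite invr0 mulr0 lexx ler01.
  have Pp : 0 < PX x by rewrite lt_def nz PX0.
  by rewrite divr_ge0 //= ler_pdivrMr // mul1r.
have piE x z y : \sum_s P (s, x) * (((ds < dS s z) || (dx < dX x y))%R)%:R = PX x * pi x z y.
  rewrite /pi /pi_fun -/(marg_X P x) -/(PX x).
  have [e0|nz] := eqVneq (PX x) 0; last by rewrite mulrC divfK.
  rewrite e0 mul0r; apply: big1 => s _.
  have /psumr_eq0P H := e0.
  by rewrite (H (fun s _ => P0 (s, x))) ?mul0r.
pose m0 : 'I_M := Ordinal HM.
pose enc (c : {ffun 'I_M -> Sh * Xh}) (x : X) := amin m0 (fun m => pi x (c m).1 (c m).2).
pose v x (c : {ffun 'I_M -> Sh * Xh}) := pi x (c (enc c x)).1 (c (enc c x)).2.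
pose w (c : {ffun 'I_M -> Sh * Xh}) := \prod_m Q (c m).
pose E (c : {ffun 'I_M -> Sh * Xh}) := det_code_error P dS dX ds dx (enc c) c.
have EE c : E c = \sum_x PX x * v x c.
  rewrite /E /det_code_error.
  transitivity (\sum_s \sum_x P (s, x) * (((ds < dS s (c (enc c x)).1) || (dx < dX x (c (enc c x)).2))%R)%:R).
    by rewrite pair_bigA; apply: eq_bigr; case.
  rewrite exchange_big /=.
  by apply: eq_bigr => x _; rewrite piE.
have w0 c : 0 <= w c by apply: prodr_ge0 => m _.
have w1 : \sum_c w c = 1.
  have := bigA_distr_bigA (fun (_ : 'I_M) (q : Sh * Xh) => Q q).
  rewrite /w /= => <-; rewrite Q1; exact: big1.
have ind t x (c : {ffun 'I_M -> Sh * Xh}) : \prod_m ((t < pi x (c m).1 (c m).2)%R)%:R = ((t < v x c)%R)%:R :> R.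
  have [tv|tv] := boolP (t < v x c).
    apply: big1 => m _; have H := @aminP _ _ m0 (fun m => pi x (c m).1 (c m).2) m; by rewrite (lt_le_trans tv H).
  rewrite (bigD1 (enc c x)) //= (negbTE tv) mul0r //.
have rcuE t : rcu_integrand M P Q dS dX ds dx t =
    \sum_(p : X * {ffun 'I_M -> Sh * Xh}) (PX p.1 * w p.2) * ((t < v p.1 p.2)%R)%:R.
  rewrite /rcu_integrand.
  rewrite -(pair_bigA _ (fun x c => (PX x * w c) * ((t < v x c)%R)%:R)) /=.
  apply: eq_bigr => x _.
  rewrite -/(PX x) -[in X in _ ^+ X](card_ord M) -prodr_const bigA_distr_bigA mulr_sumr.
  apply: eq_bigr => c _; rewrite big_split /= ind mulrA //.
have [q0 _] : exists q : (Sh * Xh)%type, true.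
  case: (pickP (xpredT : pred (Sh * Xh)%type)) => [q0 _|h]; first by exists q0.
  by move: Q1; rewrite big_pred0 // => /esym/eqP; rewrite oner_eq0.
pose c0 : {ffun 'I_M -> Sh * Xh} := [ffun _ => q0].
pose cs := amin c0 E.
exists (enc cs), cs.
under eq_integral => t _ do rewrite rcuE.
rewrite sum_int; last first.
- by move=> p; apply: pi01.
- by move=> p; apply: mulr_ge0.
rewrite lee_fin.
have -> : \sum_(p : X * {ffun 'I_M -> Sh * Xh}) PX p.1 * w p.2 * v p.1 p.2 =
   \sum_c w c * E c.
  rewrite -(pair_bigA _ (fun x c => PX x * w c * v x c)) /= exchange_big /=.
  apply: eq_bigr => c _; rewrite EE mulr_sumr; apply: eq_bigr => x _.
  by rewrite [RHS]mulrA (mulrC (w c)).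
rewrite -/(E cs) -[E cs]mul1r -w1 mulr_suml.
apply: ler_sum => c _; apply: ler_wpM2l => //; exact: (@aminP _ _ c0 E c).
Qed.
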